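(* For every circular arc graph $G$, $\operatorname{box}(G)\le 2\omega(G)+1\le 2\Delta(G)+3$.
   Context: A graph $G$ is a circular arc graph if its vertices can be put in one-to-one correspondence with a set of arcs of a circle so that two vertices are adjacent iff their arcs intersect. $\omega(G)$ is the clique number and $\Delta(G)$ the maximum degree. The boxicity $\operatorname{box}(G)$ is the minimum $b$ such that $G$ is the intersection graph of axis-parallel boxes in $\mathbb{R}^b$ (products of $b$ closed intervals), one box per vertex. *)

(* Defs.v *)
From mathcomp Require Import all_boot.
From Stdlib Require Import Reals Lra ZArith ClassicalEpsilon.

Set Implicit Arguments.
Unset Strict Implicit.
Unset Printing Implicit Defensive.

Definition simple_graph (T : finType) (e : rel T) : Prop :=
  symmetric e /\ irreflexive e.

(* The circle is R / Z (circumference 1).  A (closed) arc is a pair (a, l)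
   with 0 <= l <= 1: it consists of the points x (mod 1) with
   a <= x + k <= a + l for some integer k. *)
Definition arc := (R * R)%type.

Definition valid_arc (A : arc) : Prop := (0 <= A.2 <= 1)%R.

Definition on_arc (A : arc) (x : R) : Prop :=
  exists k : Z, (A.1 <= x + IZR k <= A.1 + A.2)%R.

Definition arcs_intersect (A B : arc) : Prop :=
  exists x : R, on_arc A x /\ on_arc B x.

Definition circular_arc_graph (T : finType) (e : rel T) : Prop :=
  exists f : T -> arc,
    (forall v, valid_arc (f v)) /\
    (forall u v, u != v -> (e u v <-> arcs_intersect (f u) (f v))).

Definition box_rep (T : finType) (e : rel T) (b : nat)
    (lo hi : T -> 'I_b -> R) : Prop :=
  (forall v i, (lo v i <= hi v i)%R) /\
  (forall u v, u != v ->
     (e u v <-> forall i, (lo u i <= hi v i)%R /\ (lo v i <= hi u i)%R)).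

Definition has_box_rep (T : finType) (e : rel T) (b : nat) : Prop :=
  exists lo hi : T -> 'I_b -> R, box_rep e lo hi.

Definition has_box_repb (T : finType) (e : rel T) : pred nat :=
  fun b => if excluded_middle_informative (has_box_rep e b) then true else false.

Lemma has_box_rep_card (T : finType) (e : rel T) :
  symmetric e -> irreflexive e -> has_box_rep e #|T|.
Proof.
move=> esym eirr.
exists (fun v i => if v == enum_val i then 1%R else 0%R).
exists (fun v i => if v == enum_val i then 1%R
                   else if e (enum_val i) v then 1%R else 0%R).
split.
  move=> v i; case: (v == enum_val i); first lra.
  case: (e _ v); lra.
move=> u v huv; split.
  move=> euv i; split.
  - case: ifP => [/eqP hu|_]; last by case: ifP => _; [|case: ifP => _]; lra.
    rewrite -hu eq_sym (negbTE huv) euv /=; lra.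
  - case: ifP => [/eqP hv|_]; last by case: ifP => _; [|case: ifP => _]; lra.
    rewrite -hv (negbTE huv) esym euv /=; lra.
move=> H; apply/negPn/negP => neuv.
have [H2 _] := H (enum_rank u).
move: H2; rewrite enum_rankK eqxx.
have -> : (v == u) = false by apply/eqP=> h; move: huv; rewrite h eqxx.
by rewrite (negbTE neuv) => /= ?; lra.
Qed.

Lemma has_box_repbP (T : finType) (e : rel T) b :
  has_box_repb e b <-> has_box_rep e b.
Proof. by rewrite /has_box_repb; case: excluded_middle_informative. Qed.

(* Every
   finite simple graph has one in dimension #|T| (has_box_rep_card); the
   disjunct (b == #|T|) only serves to make ex_minn total for arbitrary
   relations and does not change the value on simple graphs (see
   boxicity_spec below). *)
Lemma ex_box_rep (T : finType) (e : rel T) :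
  exists b, has_box_repb e b || (b == #|T|).
Proof. by exists #|T|; rewrite eqxx orbT. Qed.

Definition boxicity (T : finType) (e : rel T) : nat := ex_minn (ex_box_rep e).

Lemma boxicity_spec (T : finType) (e : rel T) :
  simple_graph e ->
  has_box_rep e (boxicity e) /\
  forall b, has_box_rep e b -> boxicity e <= b.
Proof.
move=> [es ei]; rewrite /boxicity; case: ex_minnP => m Hm Hmin; split.
  case/orP: Hm => [/has_box_repbP //|/eqP ->]; exact: has_box_rep_card.
by move=> b /has_box_repbP hb; apply: Hmin; rewrite hb.
Qed.

Definition is_clique (T : finType) (e : rel T) (A : {set T}) : bool :=
  [forall u in A, forall v in A, (u != v) ==> e u v].

Definition clique_number (T : finType) (e : rel T) : nat :=
  \max_(A : {set T} | is_clique e A) #|A|.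

Definition degree (T : finType) (e : rel T) (v : T) : nat :=
  #|[set u | e v u]|.

Definition max_degree (T : finType) (e : rel T) : nat :=
  \max_(v : T) degree e v.

(* Main.v *)
From Stdlib Require Import Reals Lra Lia ZArith ClassicalEpsilon.
Require Import Defs.
From mathcomp Require Import all_boot.
From mathcomp Require Import zify.

Set Implicit Arguments.
Unset Strict Implicit.
Unset Printing Implicit Defensive.

Local Open Scope R_scope.
Definition fr (A : Defs.arc) : R := frac_part A.1.

Lemma on_arc_fr A x :
  on_arc A x <-> exists k : Z, (fr A <= x + IZR k <= fr A + A.2).
Proof.
unfold on_arc, fr, frac_part; split; intros [k Hk].
- exists (k - Int_part A.1)%Z; rewrite minus_IZR; lra.
- exists (k + Int_part A.1)%Z; rewrite plus_IZR; lra.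
Qed.

Lemma not_on0 A : valid_arc A -> ~ on_arc A 0 -> (0 < fr A /\ fr A + A.2 < 1).
Proof.
intros [Hl Hl'] H; rewrite on_arc_fr in H.
pose proof (base_fp A.1) as [H1 H2]; fold (fr A) in H1, H2.
split.
- destruct (Rle_lt_dec (fr A) 0) as [h|h]; [exfalso; apply H; exists 0%Z; lra | lra].
- destruct (Rle_lt_dec 1 (fr A + A.2)) as [h|h]; [exfalso; apply H; exists 1%Z; lra | lra].
Qed.

Lemma arcs_int_iff A B : valid_arc A -> valid_arc B ->
  ~ on_arc A 0 -> ~ on_arc B 0 ->
  arcs_intersect A B <-> (fr A <= fr B + B.2 /\ fr B <= fr A + A.2).
Proof.
intros vA vB nA nB.
destruct (not_on0 vA nA); destruct (not_on0 vB nB).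
destruct vA, vB.
split.
- intros [x [HA HB]]; apply on_arc_fr in HA; apply on_arc_fr in HB.
  destruct HA as [k1 G1], HB as [k2 G2].
  assert (k1 = k2).
  { assert (h1 : (IZR (k1 - k2) < 1))  by (rewrite minus_IZR; lra).
    assert (h2 : (IZR (k2 - k1) < 1)) by (rewrite minus_IZR; lra).
    apply lt_IZR in h1; apply lt_IZR in h2; lia. }
  subst; lra.
- intros. exists (Rmax (fr A) (fr B)); rewrite !on_arc_fr.
  split; exists 0%Z; unfold Rmax; destruct Rle_dec; lra.
Qed.

Definition inC (T : finType) (f : T -> Defs.arc) (v : T) : bool :=
  if excluded_middle_informative (on_arc (f v) 0) then true else false.

Lemma inCP (T : finType) (f : T -> Defs.arc) v : inC f v <-> on_arc (f v) 0.
Proof. by rewrite /inC; case: excluded_middle_informative. Qed.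

Lemma car_box (T : finType) (e : rel T) (f : T -> Defs.arc) b :
  simple_graph e -> (forall v, valid_arc (f v)) ->
  (forall u v, u != v -> (e u v <-> arcs_intersect (f u) (f v))) ->
  (#|[set v | inC f v]| < b)%N -> has_box_rep e b.
Proof.
move=> [esym eirr] fv fe Cb.
set s := enum [set v | inC f v].
have adjC : forall u v, u != v -> inC f u -> inC f v -> e u v.
  move=> u v uv /inCP hu /inCP hv; apply/(fe _ _ uv); by exists 0.
exists (fun v (i : 'I_b) =>
  if (nat_of_ord i == 0)%N then (if inC f v then 0 else fr (f v))
  else if (i.-1 < size s)%N then
     (if nth v s i.-1 == v then 0 else if e (nth v s i.-1) v then 0 else 1)
  else 0).
exists (fun v (i : 'I_b) =>
  if (nat_of_ord i == 0)%N then (if inC f v then 1 else fr (f v) + (f v).2)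
  else if (i.-1 < size s)%N then
     (if nth v s i.-1 == v then 0 else 1)
  else 0).
split.
  move=> v i; case: ifP => _.
    case: ifP => _; first lra.
    have [? ?] := fv v; lra.
  case: ifP => _; last lra.
  case: ifP => _; first lra.
  case: ifP => _; lra.
move=> u v uv; split.
  move=> euv i; case: ifP => i0.
    case hu: (inC f u); case hv: (inC f v).
    - lra.
    - have nv : ~ on_arc (f v) 0 by move=> /inCP; rewrite hv.
      have := not_on0 (fv v) nv; have [? ?] := fv v; lra.
    - have nu : ~ on_arc (f u) 0 by move=> /inCP; rewrite hu.
      have := not_on0 (fv u) nu; have [? ?] := fv u; lra.
    - have nv : ~ on_arc (f v) 0 by move=> /inCP; rewrite hv.
      have nu : ~ on_arc (f u) 0 by move=> /inCP; rewrite hu.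
      have := (proj1 (arcs_int_iff (fv u) (fv v) nu nv) (proj1 (fe _ _ uv) euv)).
      lra.
  case: ifP => js; last lra.
  rewrite (set_nth_default u v js).
  set c := nth u s i.-1.
  case: (c =P u) => [cu|cu]; case: (c =P v) => [cv|cv].
  - by move: uv; rewrite -cu -cv eqxx.
  - rewrite cu euv; lra.
  - rewrite cv esym euv; lra.
  - case: ifP => _; case: ifP => _; lra.
move=> H.
case hu: (inC f u).
  have ui : ((index u s).+1 < b)%N.
    apply: leq_trans Cb; rewrite ltnS cardE index_mem mem_enum inE; exact: hu.
  have [H1 H2] := H (Ordinal ui).
  move: H1 H2 => /=.
  have js : (index u s < size s)%N by rewrite index_mem mem_enum inE.
  rewrite js (set_nth_default u v js) nth_index ?mem_enum ?inE // eqxx.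
  rewrite (negbTE uv).
  by case: (e u v) => // _ ?; exfalso; lra.
case hv: (inC f v).
  have vi : ((index v s).+1 < b)%N.
    apply: leq_trans Cb; rewrite ltnS cardE index_mem mem_enum inE; exact: hv.
  have [H1 H2] := H (Ordinal vi).
  move: H1 H2 => /=.
  have js : (index v s < size s)%N by rewrite index_mem mem_enum inE.
  rewrite js (set_nth_default v u js) nth_index ?mem_enum ?inE // eqxx.
  rewrite eq_sym (negbTE uv) esym.
  by case: (e u v) => // ? ?; exfalso; lra.
have b0 : (0 < b)%N by apply: leq_ltn_trans Cb.
have [H1 H2] := H (Ordinal b0).
move: H1 H2 => /=; rewrite hu hv => H1 H2.
have nv : ~ on_arc (f v) 0 by move=> /inCP; rewrite hv.
have nu : ~ on_arc (f u) 0 by move=> /inCP; rewrite hu.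
apply/(fe _ _ uv); apply/(arcs_int_iff (fv u) (fv v) nu nv); lra.
Qed.

Local Close Scope R_scope.

Theorem theorem6 (T : finType) (e : rel T) :
  simple_graph e -> circular_arc_graph e ->
  (boxicity e <= (clique_number e).*2.+1 <= (max_degree e).*2 + 3)%N.
Proof.
move=> sg [f [fv fe]].
have [esym eirr] := sg.
apply/andP; split.
  apply: (proj2 (boxicity_spec sg)); apply: (car_box sg fv fe).
  have : (#|[set v | inC f v]| <= clique_number e)%N.
    apply: (leq_bigmax_cond (F := fun A : {set T} => #|A|)).
    apply/forallP => u; apply/implyP; rewrite inE => /inCP hu.
    apply/forallP => v; apply/implyP; rewrite inE => /inCP hv.
    apply/implyP => uv; apply/(fe _ _ uv); by exists (IZR Z0).
  move=> h; rewrite ltnS; apply: leq_trans h _; rewrite -addnn; exact: leq_addr.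
have : (clique_number e <= (max_degree e).+1)%N.
  apply/bigmax_leqP => A /forallP cl.
  case: (set_0Vmem A) => [->|[v vA]]; first by rewrite cards0.
  have sub : A \subset v |: [set u | e v u].
    apply/subsetP => u uA; rewrite !inE.
    case: (u =P v) => [//|/eqP uv] /=.
    have := cl v; rewrite vA /= => /forallP /(_ u); rewrite uA /= eq_sym uv //.
  apply: leq_trans (subset_leq_card sub) _.
  rewrite cardsU1 -add1n; apply: leq_add; first by case: (_ \notin _).
  exact: (leq_bigmax (F := fun v => degree e v) v).
move=> h; rewrite -!addnn; lia.
Qed.
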